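(* The unique $F$-coalgebra morphism $\varphi_\Pi:\mathbb DA^\infty\to\Omega$ from $(\mathbb DA^\infty,\Pi)$ to the final $F$-coalgebra $(\Omega,\omega)$ is injective.
   Context: $A$ finite alphabet; $A^\infty=A^*\cup A^\omega$ with $\sigma$-algebra $\Sigma_{A^\infty}$ generated by $S_\infty=\{\emptyset\}\cup\{\{w\}\mid w\in A^*\}\cup\{wA^\infty\mid w\in A^*\}$. $\mathbb I=[0,1]$. $\mathbb DA^\infty$ is the set of sub-probability measures on $(A^\infty,\Sigma_{A^\infty})$, with the $\sigma$-algebra generated by $m\mapsto m(S)$. For $m\in\mathbb DA^\infty$ and $a\in A$, the measure derivative is $m_a(S)=m(aS)$. $F$ is the functor $FX=\mathbb I\times\mathbb I\times X^A$, $Ff=\mathrm{id}\times\mathrm{id}\times f^A$. $\Pi:\mathbb DA^\infty\to F\mathbb DA^\infty$ is $\Pi(m)=\langle m(A^\infty),m(\{\varepsilon\}),a\mapsto m_a\rangle$. $\Omega=(\mathbb I\times\mathbb I)^{A^*}$ with $\omega(L)=\langle L(\varepsilon),a\mapsto L_a\rangle$, $L_a(w)=L(aw)$; $(\Omega,\omega)$ is the final $F$-coalgebra, and an $F$-coalgebra morphism from $(Y,\beta)$ to $(\Omega,\omega)$ is a map $\varphi$ with $\omega\circ\varphi=F\varphi\circ\beta$. *)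

(* Defs.v *)
From Stdlib Require Import Reals List.
Open Scope R_scope.
Set Implicit Arguments.

Section Defs.
Variable A : Type.

Definition word : Type := (list A + (nat -> A))%type.

Definition wcons (a : A) (x : word) : word :=
  match x with
  | inl v => inl (a :: v)
  | inr s => inr (fun n => match n with O => a | S k => s k end)
  end.
Definition wprepend (w : list A) (x : word) : word := fold_right wcons x w.

Definition wset : Type := word -> Prop.

Definition emptyset : wset := fun _ => False.
Definition fullset : wset := fun _ => True.
Definition singleton (w : list A) : wset := fun x => x = inl w.
Definition cylinder (w : list A) : wset := fun x => exists y, x = wprepend w y.
Definition prefix_set (a : A) (S : wset) : wset := fun x => exists y, S y /\ x = wcons a y.

Definition generator (S : wset) : Prop :=
  S = emptyset \/ (exists w, S = singleton w) \/ (exists w, S = cylinder w).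

Definition is_sigma_algebra (M : wset -> Prop) : Prop :=
  M emptyset /\
  (forall S, M S -> M (fun x => ~ S x)) /\
  (forall f : nat -> wset, (forall n, M (f n)) -> M (fun x => exists n, f n x)).

Definition measurable (S : wset) : Prop :=
  forall M, is_sigma_algebra M -> (forall G, generator G -> M G) -> M S.

(* a set function; only its values on measurable sets are meaningful *)
Definition setfun : Type := wset -> R.

Definition is_subprob (m : setfun) : Prop :=
  m emptyset = 0 /\
  (forall S, measurable S -> 0 <= m S) /\
  (forall f : nat -> wset,
      (forall n, measurable (f n)) ->
      (forall i j x, i <> j -> f i x -> f j x -> False) ->
      infinite_sum (fun n => m (f n)) (m (fun x => exists n, f n x))) /\
  m fullset <= 1.

Definition mderiv (a : A) (m : setfun) : setfun := fun S => m (prefix_set a S).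

Definition Omega : Type := list A -> (R * R).
Definition Lderiv (a : A) (L : Omega) : Omega := fun w => L (a :: w).

(* phi is an F-coalgebra morphism from (D A^infty, Pi) to (Omega, omega):
   omega (phi m) = F phi (Pi m), i.e.
   (phi m)(eps) = <m(A^infty), m({eps})> and (phi m)_a = phi(m_a) for all a. *)
Definition is_coalg_morphism (phi : setfun -> Omega) : Prop :=
  forall m, is_subprob m ->
    phi m nil = (m fullset, m (singleton nil)) /\
    (forall a, Lderiv a (phi m) = phi (mderiv a m)).

End Defs.

(* Main.v *)
Require Import Defs.
From Stdlib Require Import Reals List Lia Lra Classical FunctionalExtensionality PropExtensionality Wf_nat.
Open Scope R_scope.

Lemma set_ext {A : Type} (S T : wset A) : (forall x, S x <-> T x) -> S = T.
Proof. intro H; apply functional_extensionality; intro x; apply propositional_extensionality; auto. Qed.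

Definition compl {A} (S : wset A) : wset A := fun x => ~ S x.
Definition inter {A} (S T : wset A) : wset A := fun x => S x /\ T x.
Definition union2 {A} (S T : wset A) : wset A := fun x => S x \/ T x.
Definition bigU {A} (f : nat -> wset A) : wset A := fun x => exists n, f n x.
Definition bin {A} (S T : wset A) (n : nat) : wset A :=
  match n with O => S | 1%nat => T | _ => @emptyset A end.
Definition disj {A} (f : nat -> wset A) : Prop :=
  forall i j x, i <> j -> f i x -> f j x -> False.

Lemma bin_union {A} (S T : wset A) : bigU (bin S T) = union2 S T.
Proof.
  apply set_ext; intro x; split.
  - intros [n Hn]. destruct n as [|[|n]]; simpl in Hn; [left|right|destruct Hn]; auto.
  - intros [H|H]; [exists O|exists 1%nat]; auto.
Qed.

Lemma bin_disj {A} (S T : wset A) : (forall x, S x -> T x -> False) -> disj (bin S T).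
Proof.
  intros H i j x Hij Hi Hj.
  destruct i as [|[|i]], j as [|[|j]]; simpl in *; try contradiction; try lia; eauto.
Qed.

Lemma sa_full {A} (M : wset A -> Prop) : is_sigma_algebra M -> M (@fullset A).
Proof.
  intros [H0 [HC HU]].
  replace (@fullset A) with (fun x => ~ @emptyset A x). apply HC, H0.
  apply set_ext; intro; unfold fullset, emptyset; tauto.
Qed.

Lemma sa_union2 {A} (M : wset A -> Prop) S T : is_sigma_algebra M -> M S -> M T -> M (union2 S T).
Proof.
  intros HM HS HT. rewrite <- bin_union. destruct HM as [H0 [HC HU]].
  apply HU. intros [|[|n]]; simpl; auto.
Qed.

Lemma sa_inter {A} (M : wset A -> Prop) S T : is_sigma_algebra M -> M S -> M T -> M (inter S T).
Proof.
  intros HM HS HT.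
  replace (inter S T) with (fun x => ~ (union2 (compl S) (compl T)) x).
  - destruct HM as [H0 [HC HU]]. apply HC. apply sa_union2; [split; auto| |]; apply HC; auto.
  - apply set_ext; intro x; unfold union2, compl, inter. tauto.
Qed.

Lemma measurable_sa {A} : is_sigma_algebra (@measurable A).
Proof.
  split; [|split].
  - intros M [H0 _] _; exact H0.
  - intros S HS M HM HG. destruct HM as [H0 [HC HU]]. apply HC. apply HS; [split; auto| auto].
  - intros f Hf M HM HG. destruct HM as [H0 [HC HU]]. apply HU. intro n. apply Hf; [split; auto| auto].
Qed.

Lemma meas_gen {A} (G : wset A) : generator G -> measurable G.
Proof. intros HG M _ H; auto. Qed.

Lemma sum_bin (g : nat -> R) : g 0%nat = 0 -> False -> True. Proof. auto. Qed.

Lemma inf_sum_bin (g : nat -> R) a b :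
  g O = a -> g 1%nat = b -> (forall n, (n >= 2)%nat -> g n = 0) -> infinite_sum g (a + b).
Proof.
  intros H0 H1 H2 eps Heps. exists 1%nat. intros n Hn.
  assert (sum_f_R0 g n = a + b).
  { induction n as [|n IH]. lia. destruct n. simpl. subst; auto.
    simpl sum_f_R0 in *. rewrite IH by lia. rewrite H2 by lia. ring. }
  rewrite H. unfold R_dist. replace (a + b - (a + b)) with 0 by ring. rewrite Rabs_R0. auto.
Qed.

Lemma add2 {A} (m : setfun A) S T : is_subprob m -> measurable S -> measurable T ->
  (forall x, S x -> T x -> False) -> m (union2 S T) = m S + m T.
Proof.
  intros [H0 [Hp [Hs _]]] HS HT HD.
  rewrite <- bin_union.
  eapply uniqueness_sum. apply Hs.
  - intros [|[|n]]; simpl; auto. apply (@meas_gen A). left; auto.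
  - apply bin_disj; auto.
  - apply inf_sum_bin; simpl; auto. intros [|[|n]] Hn; [lia|lia|]; simpl; auto.
Qed.

Lemma m_compl {A} (m : setfun A) S : is_subprob m -> measurable S ->
  m (fun x => ~ S x) = m (@fullset A) - m S.
Proof.
  intros Hm HS.
  replace (@fullset A) with (union2 S (fun x => ~ S x)).
  rewrite add2; [ring|auto|auto| |].
  destruct (@measurable_sa A) as [_ [HC _]]. apply HC; auto.
  intros x; tauto.
  apply set_ext; intro x; unfold union2, fullset; split; auto. intros _. apply classic.
Qed.

Lemma m_le_full {A} (m : setfun A) S : is_subprob m -> measurable S -> m S <= m (@fullset A).
Proof.
  intros Hm HS. pose proof (m_compl m S Hm HS).
  destruct Hm as [_ [Hp _]].
  assert (0 <= m (fun x => ~ S x)). apply Hp. destruct (@measurable_sa A) as [_ [HC _]]. apply HC; auto.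
  lra.
Qed.

Lemma wcons_inj {A} (a : A) y z : wcons a y = wcons a z -> y = z.
Proof.
  destruct y as [v|s], z as [u|t]; simpl; intro H; try discriminate.
  - injection H; intros; subst; auto.
  - injection H; intro H'. f_equal. apply functional_extensionality; intro k.
    exact (f_equal (fun g => g (S k)) H').
Qed.

Lemma prefix_empty {A} (a : A) : prefix_set a (@emptyset A) = @emptyset A.
Proof. apply set_ext; intro x; unfold prefix_set, emptyset; split; [intros [y [[] _]]|intros []]. Qed.

Lemma prefix_single {A} (a : A) w : prefix_set a (singleton w) = singleton (a :: w).
Proof.
  apply set_ext; intro x; unfold prefix_set, singleton; split.
  - intros [y [Hy Hx]]; subst; reflexivity.
  - intro Hx; subst. exists (inl w); split; reflexivity.
Qed.

Lemma prefix_cyl {A} (a : A) w : prefix_set a (cylinder w) = cylinder (a :: w).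
Proof.
  apply set_ext; intro x; unfold prefix_set, cylinder; split.
  - intros [y [[z Hz] Hx]]; subst. exists z; reflexivity.
  - intros [z Hz]; subst. exists (wprepend w z); split; [exists z|]; reflexivity.
Qed.

Lemma prefix_meas {A} (a : A) S : measurable S -> measurable (prefix_set a S).
Proof.
  intro HS. apply (HS (fun S => measurable (prefix_set a S))).
  - split; [|split].
    + rewrite prefix_empty. apply meas_gen; left; auto.
    + intros T HT.
      replace (prefix_set a (fun x => ~ T x)) with (inter (cylinder (a::nil)) (fun x => ~ prefix_set a T x)).
      * apply sa_inter. apply measurable_sa. apply meas_gen; right; right; eauto.
        destruct (@measurable_sa A) as [_ [HC _]]; auto.
      * apply set_ext; intro x; unfold inter, prefix_set, cylinder; split.
        -- intros [[z Hz] Hn]. exists z; split; auto. intro HTz. apply Hn. exists z; auto.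
        -- intros [y [Hy Hx]]. split. exists y; auto.
           intros [z [Hz Hx']]. subst. apply wcons_inj in Hx'. subst; auto.
    + intros f Hf.
      replace (prefix_set a (fun x => exists n, f n x)) with (fun x => exists n, prefix_set a (f n) x).
      * destruct (@measurable_sa A) as [_ [_ HU]]; auto.
      * apply set_ext; intro x; unfold prefix_set; split.
        -- intros [n [y [Hy Hx]]]. exists y; split; eauto.
        -- intros [y [[n Hy] Hx]]. exists n, y; auto.
  - intros G [HG|[[w HG]|[w HG]]]; subst.
    + rewrite prefix_empty. apply meas_gen; left; auto.
    + rewrite prefix_single. apply meas_gen; right; left; eauto.
    + rewrite prefix_cyl. apply meas_gen; right; right; eauto.
Qed.

Lemma mderiv_subprob {A} (a : A) m : is_subprob m -> is_subprob (mderiv a m).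
Proof.
  intros Hm. pose proof Hm as [H0 [Hp [Hs H1]]]. unfold mderiv. split; [|split; [|split]].
  - rewrite prefix_empty; auto.
  - intros S HS; apply Hp, prefix_meas; auto.
  - intros f Hf Hd.
    replace (prefix_set a (fun x => exists n, f n x)) with (fun x => exists n, prefix_set a (f n) x).
    + apply Hs. intro n; apply prefix_meas; auto.
      intros i j x Hij [y [Hy Hx]] [z [Hz Hx']]. subst. apply wcons_inj in Hx'; subst. eauto.
    + apply set_ext; intro x; unfold prefix_set; split.
      * intros [n [y [Hy Hx]]]. exists y; split; eauto.
      * intros [y [[n Hy] Hx]]. exists n, y; auto.
  - eapply Rle_trans; [apply m_le_full; auto|auto].
    apply prefix_meas. apply (sa_full _ (@measurable_sa A)).
Qed.

Lemma wcons_inj2 {A} (a b : A) y z : wcons a y = wcons b z -> a = b /\ y = z.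
Proof.
  intro H. assert (a = b).
  { destruct y, z; simpl in H; try discriminate.
    - injection H; auto.
    - injection H; intro H'. exact (f_equal (fun g => g O) H'). }
  subst; split; auto. apply wcons_inj in H; auto.
Qed.

Lemma wprepend_app {A} (u v : list A) y : wprepend (u ++ v) y = wprepend u (wprepend v y).
Proof. unfold wprepend. apply fold_right_app. Qed.

Lemma wprepend_cmp {A} (u v : list A) y z : wprepend u y = wprepend v z ->
  (exists w, u = v ++ w) \/ (exists w, v = u ++ w).
Proof.
  revert v. induction u as [|a u IH]; intros v H.
  - right; exists v; auto.
  - destruct v as [|b v]. left; exists (a::u); auto.
    simpl in H. apply wcons_inj2 in H as [-> H].
    destruct (IH v H) as [[w ->]|[w ->]]; [left|right]; exists w; auto.
Qed.

Lemma inter_comm {A} (S T : wset A) : inter S T = inter T S.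
Proof. apply set_ext; intro; unfold inter; tauto. Qed.

Lemma inter_empty {A} (S : wset A) : inter (@emptyset A) S = @emptyset A.
Proof. apply set_ext; intro; unfold inter, emptyset; tauto. Qed.

Lemma gen_inter {A} (G H : wset A) : generator G -> generator H -> generator (inter G H).
Proof.
  assert (E : forall S : wset A, (forall x, ~ S x) -> generator S).
  { intros S HS; left; apply set_ext; intro x; unfold emptyset; split; [apply HS|intros []]. }
  assert (SG : forall u (H : wset A), H (inl u) -> generator (inter (singleton u) H)).
  { intros u H0 Hu. right; left; exists u. apply set_ext; intro x; unfold inter, singleton; split.
    tauto. intros ->; auto. }
  assert (SN : forall u (H : wset A), ~ H (inl u) -> generator (inter (singleton u) H)).
  { intros u H0 Hu. apply E. intros x [Hx Hx']. unfold singleton in Hx; subst; auto. }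
  intros [HG|[[u HG]|[u HG]]] [HH|[[v HH]|[v HH]]]; subst;
    try (rewrite inter_empty; left; auto); try (rewrite inter_comm, inter_empty; left; auto).
  - destruct (classic (singleton v (inl u))); auto.
  - destruct (classic (cylinder v (inl u))); auto.
  - rewrite inter_comm. destruct (classic (cylinder u (inl v))); auto.
  - destruct (classic (exists w, u = v ++ w)) as [[w ->]|N1].
    { right; right; exists (v ++ w). apply set_ext; intro x; unfold inter, cylinder; split. tauto.
      intros [y ->]; split; [exists y|exists (wprepend w y)]; auto. apply wprepend_app. }
    destruct (classic (exists w, v = u ++ w)) as [[w ->]|N2].
    { right; right; exists (u ++ w). apply set_ext; intro x; unfold inter, cylinder; split. tauto.
      intros [y ->]; split; [exists (wprepend w y)|exists y]; auto. apply wprepend_app. }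
    apply E. intros x [[y Hy] [z Hz]]. subst.
    destruct (wprepend_cmp _ _ _ _ Hz); auto.
Qed.

Definition lam {A} (L : wset A -> Prop) : Prop :=
  L (@fullset A) /\ (forall S, L S -> L (fun x => ~ S x)) /\
  (forall f, (forall n, L (f n)) -> disj f -> L (fun x => exists n, f n x)).

Definition dyn {A} (S : wset A) : Prop :=
  forall L, lam L -> (forall G, generator G -> L G) -> L S.

Lemma dyn_lam {A} : lam (@dyn A).
Proof.
  split; [|split].
  - intros L [H _] _; auto.
  - intros S HS L HL HG. destruct HL as [H1 [HC HU]]. apply HC, HS; [split; auto|auto].
  - intros f Hf Hd L HL HG. destruct HL as [H1 [HC HU]]. apply HU; auto. intro n; apply Hf; [split; auto|auto].
Qed.

Lemma dyn_gen {A} (G : wset A) : generator G -> dyn G.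
Proof. intros HG L _ H; auto. Qed.

Lemma lam_empty {A} (L : wset A -> Prop) : lam L -> L (@emptyset A).
Proof.
  intros [H1 [HC _]]. replace (@emptyset A) with (fun x => ~ @fullset A x). auto.
  apply set_ext; intro; unfold fullset, emptyset; tauto.
Qed.

Lemma lam_union2 {A} (L : wset A -> Prop) S T : lam L -> L S -> L T ->
  (forall x, S x -> T x -> False) -> L (union2 S T).
Proof.
  intros HL HS HT HD. rewrite <- bin_union. pose proof (lam_empty L HL).
  destruct HL as [_ [_ HU]]. apply HU. intros [|[|n]]; simpl; auto. apply bin_disj; auto.
Qed.

Lemma lam_inter_fixed {A} (T : wset A) : dyn T -> lam (fun S => dyn (inter S T)).
Proof.
  intro HT. pose proof (@dyn_lam A) as HL. split; [|split].
  - replace (inter (@fullset A) T) with T; auto. apply set_ext; intro; unfold inter, fullset; tauto.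
  - intros S HS.
    replace (inter (fun x => ~ S x) T) with (fun x => ~ (union2 (inter S T) (fun x => ~ T x)) x).
    + pose proof HL as [_ [HC _]]. apply HC. apply lam_union2; auto. unfold inter; tauto.
    + apply set_ext; intro x; unfold union2, inter; split; [|tauto].
      intro H. destruct (classic (S x)), (classic (T x)); tauto.
  - intros f Hf Hd.
    replace (inter (fun x => exists n, f n x) T) with (fun x => exists n, inter (f n) T x).
    + destruct HL as [_ [_ HU]]. apply HU; auto. intros i j x Hij [H1 _] [H2 _]; eauto.
    + apply set_ext; intro x; unfold inter; split.
      intros [n [H1 H2]]; eauto. intros [[n H1] H2]; eauto.
Qed.

Lemma dyn_inter_gen {A} (S G : wset A) : generator G -> dyn S -> dyn (inter S G).
Proof.
  intros HG HS. apply (HS (fun S => dyn (inter S G))).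
  apply lam_inter_fixed, dyn_gen; auto.
  intros G' HG'. apply dyn_gen, gen_inter; auto.
Qed.

Lemma dyn_inter {A} (S T : wset A) : dyn S -> dyn T -> dyn (inter S T).
Proof.
  intros HS HT. apply (HS (fun S => dyn (inter S T))).
  apply lam_inter_fixed; auto.
  intros G HG. rewrite inter_comm. apply dyn_inter_gen; auto.
Qed.

Lemma dyn_union2 {A} (S T : wset A) : dyn S -> dyn T -> dyn (union2 S T).
Proof.
  intros HS HT. pose proof (@dyn_lam A) as [_ [HC _]].
  replace (union2 S T) with (fun x => ~ (inter (fun x => ~ S x) (fun x => ~ T x)) x).
  apply HC, dyn_inter; auto.
  apply set_ext; intro x; unfold union2, inter; split; [|tauto].
  intro H. destruct (classic (S x)); tauto.
Qed.

Definition PU {A} (f : nat -> wset A) (n : nat) : wset A := fun x => exists k, (k < n)%nat /\ f k x.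

Lemma least_ex (P : nat -> Prop) : (exists n, P n) -> exists n, P n /\ forall k, (k < n)%nat -> ~ P k.
Proof.
  intros [n Hn]. induction n as [n IH] using lt_wf_ind.
  destruct (classic (exists k, (k < n)%nat /\ P k)) as [[k [Hk Pk]]|N].
  - apply (IH k Hk Pk).
  - exists n; split; auto. intros k Hk Pk; apply N; eauto.
Qed.

Lemma dyn_sa {A} : is_sigma_algebra (@dyn A).
Proof.
  pose proof (@dyn_lam A) as HL. split; [|split].
  - apply lam_empty; auto.
  - destruct HL as [_ [HC _]]; auto.
  - intros f Hf.
    assert (HP : forall n, dyn (PU f n)).
    { induction n.
      - replace (PU f 0) with (@emptyset A). apply lam_empty; auto.
        apply set_ext; intro; unfold PU, emptyset; split; [tauto|intros [k [Hk _]]; lia].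
      - replace (PU f (S n)) with (union2 (PU f n) (f n)). apply dyn_union2; auto.
        apply set_ext; intro x; unfold PU, union2; split.
        + intros [[k [Hk H]]|H]; exists k || exists n; split; auto; lia.
        + intros [k [Hk H]]. destruct (Nat.eq_dec k n); [subst; right; auto|left; exists k; split; auto; lia]. }
    replace (fun x => exists n, f n x) with (fun x => exists n, inter (f n) (fun y => ~ PU f n y) x).
    + destruct HL as [_ [HC HU]]. apply HU.
      * intro n. apply dyn_inter; auto.
      * intros i j x Hij [Hi Ni] [Hj Nj].
        destruct (Nat.lt_total i j) as [H|[H|H]]; [|lia|].
        -- apply Nj; exists i; auto.
        -- apply Ni; exists j; auto.
    + apply set_ext; intro x; unfold inter, PU; split.
      * intros [n [H _]]; eauto.
      * intro H. destruct (least_ex (fun n => f n x) H) as [n [Hn Hmin]].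
        exists n; split; auto. intros [k [Hk Hfk]]. apply (Hmin k); auto.
Qed.

Lemma meas_dyn {A} (S : wset A) : measurable S -> dyn S.
Proof. intro HS. apply HS. apply dyn_sa. apply dyn_gen. Qed.

Lemma D_lam {A} (m1 m2 : setfun A) : is_subprob m1 -> is_subprob m2 ->
  m1 (@fullset A) = m2 (@fullset A) -> lam (fun S => measurable S /\ m1 S = m2 S).
Proof.
  intros H1 H2 Hf. pose proof (@measurable_sa A) as HM. split; [|split].
  - split; auto. apply sa_full; auto.
  - intros S [HS E]. split. destruct HM as [_ [HC _]]; auto.
    rewrite !m_compl; auto. rewrite E, Hf; auto.
  - intros f Hf' Hd. split. destruct HM as [_ [_ HU]]. apply HU; intro n; apply Hf'.
    pose proof H1 as [_ [_ [S1 _]]]. pose proof H2 as [_ [_ [S2 _]]].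
    assert (Hm : forall n, measurable (f n)) by (intro n; apply Hf').
    pose proof (S1 f Hm Hd) as A1. pose proof (S2 f Hm Hd) as A2.
    replace (fun n => m1 (f n)) with (fun n => m2 (f n)) in A1.
    eapply uniqueness_sum; eauto.
    apply functional_extensionality; intro n; symmetry; apply Hf'.
Qed.

Definition pre {A} (w : list A) (S : wset A) : wset A := fold_right (@prefix_set A) S w.

Lemma pre_full {A} (w : list A) : pre w (@fullset A) = cylinder w.
Proof.
  induction w as [|a w IH]; simpl.
  - apply set_ext; intro x; unfold fullset, cylinder; split; [intros _; exists x; auto|auto].
  - rewrite IH. apply prefix_cyl.
Qed.

Lemma pre_single {A} (w : list A) : pre w (singleton nil) = singleton w.
Proof. induction w as [|a w IH]; simpl; auto. rewrite IH. apply prefix_single. Qed.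

Lemma phi_val {A} (phi : setfun A -> Omega A) : is_coalg_morphism phi ->
  forall w m, is_subprob m -> phi m w = (m (pre w (@fullset A)), m (pre w (singleton nil))).
Proof.
  intros Hphi w. induction w as [|a w IH]; intros m Hm.
  - apply (Hphi m Hm).
  - change (phi m (a :: w)) with (Lderiv a (phi m) w).
    rewrite (proj2 (Hphi m Hm) a). rewrite IH by (apply mderiv_subprob; auto). reflexivity.
Qed.

Theorem mainTheorem9 (A : Type) (HA : exists l : list A, forall a : A, In a l) :
  (exists phi : setfun A -> Omega A, is_coalg_morphism phi) /\
  (forall phi : setfun A -> Omega A, is_coalg_morphism phi ->
     forall m1 m2 : setfun A, is_subprob m1 -> is_subprob m2 ->
       phi m1 = phi m2 ->
       forall S : wset A, measurable S -> m1 S = m2 S).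
Proof.
  split.
  - exists (fun m w => (m (pre w (@fullset A)), m (pre w (singleton nil)))).
    intros m Hm; split; [reflexivity|]. intro a; reflexivity.
  - intros phi Hphi m1 m2 H1 H2 E S HS.
    assert (Hw : forall w, m1 (cylinder w) = m2 (cylinder w) /\ m1 (singleton w) = m2 (singleton w)).
    { intro w. pose proof (f_equal (fun L => L w) E) as Ew. simpl in Ew.
      rewrite !(phi_val phi Hphi) in Ew by auto. rewrite pre_full, pre_single in Ew.
      injection Ew; auto. }
    assert (Hf : m1 (@fullset A) = m2 (@fullset A)).
    { change (@fullset A) with (pre (@nil A) (@fullset A)). rewrite pre_full. apply Hw. }
    apply (meas_dyn S HS (fun S => measurable S /\ m1 S = m2 S)).
    + apply D_lam; auto.
    + intros G HG. split. apply meas_gen; auto.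
      destruct HG as [->|[[w ->]|[w ->]]]; try apply Hw.
      destruct H1 as [-> _], H2 as [-> _]; auto.
Qed.
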